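(* Let $(G;+)$ be a commutative groupoid and let $M, M'$ be multisets over $G$ with $|M| = |M'| \geq 5$. Then the deck of $M$ equals the deck of $M'$ if and only if $M = M'$. In particular, every multiset of cardinality at least $5$ over any commutative groupoid is reconstructible.
   Context: A (finite) multiset $M$ over a set $X$ is a function $\mathbf{1}_M \colon X \to \mathbb{N}$ with finite support; $|M| = \sum_x \mathbf{1}_M(x)$ is its cardinality. Multiset sum $\uplus$ adds multiplicities; the difference $M \setminus M'$ has multiplicities $\max(\mathbf{1}_M(x)-\mathbf{1}_{M'}(x),0)$. $\langle x_1,\dots,x_k\rangle$ denotes the multiset in which each element occurs as often as it appears in the list. A commutative groupoid is a set $G$ with a commutative binary operation $+$ (not necessarily associative). Cards and deck: for a multiset $M$ of cardinality $n \geq 2$ over $G$, fix $(m_1,\dots,m_n) \in G^n$ with $M = \langle m_1,\dots,m_n\rangle$; for $I = \{i,j\}$, $1 \le i<j \le n$, the card $M_I$ is $M \setminus \langle m_i, m_j\rangle \uplus \langle m_i + m_j\rangle$. The deck of $M$ is the multiset $\langle M_I : I \rangle$ of all $\binom{n}{2}$ cards (independent of the chosen tuple). $M$ is reconstructible if every multiset $M'$ over $G$ with the same deck equals $M$. *)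

(* Defs.v *)
(* Multisets over an arbitrary type G are represented by lists
   taken up to permutation (Stdlib Permutation); no decidable equality needed. *)
From Stdlib Require Import List Permutation.
Import ListNotations.

Fixpoint picks {G : Type} (l : list G) : list (G * list G) :=
  match l with
  | [] => []
  | x :: t => (x, t) :: map (fun p => (fst p, x :: snd p)) (picks t)
  end.

(* deck op l : the list of all C(n,2) cards M_I, one for each unordered pair
   I = {i,j} of positions i < j of l: the two entries are removed and their
   sum (op) is added. *)
Fixpoint deck {G : Type} (op : G -> G -> G) (l : list G) : list (list G) :=
  match l with
  | [] => []
  | x :: t => map (fun p => op x (fst p) :: snd p) (picks t)
              ++ map (cons x) (deck op t)
  end.

(* Equality of multisets of multisets: D and D' agree up to reordering
   the cards, each card being taken up to permutation. *)
Definition mset_mset_eq {G : Type} (D D' : list (list G)) : Prop :=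
  exists D'', Permutation D' D'' /\ Forall2 (@Permutation G) D D''.

Definition same_deck {G : Type} (op : G -> G -> G) (M M' : list G) : Prop :=
  mset_mset_eq (deck op M) (deck op M').

Definition reconstructible {G : Type} (op : G -> G -> G) (M : list G) : Prop :=
  forall M' : list G, same_deck op M M' -> Permutation M M'.

(* Main.v *)
Require Import Defs.
From Stdlib Require Import List Permutation Lia Arith ClassicalEpsilon Classical.
Import ListNotations.

Definition ER {A} (R : A -> A -> Prop) (P Q : list A) : Prop :=
  exists Q', Permutation Q Q' /\ Forall2 R P Q'.

Lemma F2_refl {A} (R : A -> A -> Prop) : (forall a, R a a) -> forall P, Forall2 R P P.
Proof. intros H P; induction P; constructor; auto. Qed.

Lemma F2_trans {A} (R : A->A->Prop) : (forall a b c, R a b -> R b c -> R a c) ->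
  forall P Q S, Forall2 R P Q -> Forall2 R Q S -> Forall2 R P S.
Proof. intros Ht P Q S H1; revert S; induction H1; intros S H2; inversion H2; subst; constructor; eauto. Qed.

Lemma ER_F2 {A} R (P Q : list A) : Forall2 R P Q -> ER R P Q.
Proof. intros H; exists Q; split; [apply Permutation_refl|exact H]. Qed.

Lemma ER_perm {A} R (Hr : forall a:A, R a a) P Q : Permutation P Q -> ER R P Q.
Proof. intros H; exists P; split; [apply Permutation_sym; exact H| apply F2_refl; exact Hr]. Qed.

Lemma ER_trans {A} R (Ht : forall a b c : A, R a b -> R b c -> R a c) P Q S :
  ER R P Q -> ER R Q S -> ER R P S.
Proof.
  intros [Q' [HQ HPQ]] [S' [HS HQS]].
  destruct (Permutation_Forall2 HQ HQS) as [S'' [HS' HQS']].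
  exists S''; split; [eapply Permutation_trans; eauto | eapply F2_trans; eauto].
Qed.

Lemma ER_app {A} R (P Q P' Q' : list A) : ER R P Q -> ER R P' Q' -> ER R (P++P') (Q++Q').
Proof.
  intros [X [H1 H2]] [Y [H3 H4]]; exists (X++Y); split.
  - apply Permutation_app; auto.
  - apply Forall2_app; auto.
Qed.

Lemma ER_cons {A} R (a b : A) P Q : R a b -> ER R P Q -> ER R (a::P) (b::Q).
Proof. intros H [X [H1 H2]]; exists (b::X); split; [apply perm_skip; auto| constructor; auto]. Qed.

Lemma F2_map {A B} (R : A -> A -> Prop) (S : B -> B -> Prop) (f : A -> B) :
  (forall a b, R a b -> S (f a) (f b)) -> forall P Q, Forall2 R P Q -> Forall2 S (map f P) (map f Q).
Proof. intros Hf P Q H; induction H; simpl; constructor; auto. Qed.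

Lemma ER_map {A B} (R : A -> A -> Prop) (S : B -> B -> Prop) (f : A -> B) :
  (forall a b, R a b -> S (f a) (f b)) -> forall P Q, ER R P Q -> ER S (map f P) (map f Q).
Proof.
  intros Hf P Q [X [H1 H2]]; exists (map f X); split.
  - apply Permutation_map; auto.
  - eapply F2_map; eauto.
Qed.

Lemma F2_mapfg {A B} (R : B -> B -> Prop) (f g : A -> B) :
  (forall p, R (f p) (g p)) -> forall P, Forall2 R (map f P) (map g P).
Proof. intros H P; induction P; simpl; constructor; auto. Qed.

Definition PR {G} (p q : G * list G) := fst p = fst q /\ Permutation (snd p) (snd q).

Lemma PR_trans {G} (a b c : G * list G) : PR a b -> PR b c -> PR a c.
Proof. intros [H1 H2] [H3 H4]; split; [congruence| eapply Permutation_trans; eauto]. Qed.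
Lemma PR_refl {G} (a : G * list G) : PR a a.
Proof. split; auto. Qed.

Lemma picks_perm {G} (l l' : list G) : Permutation l l' -> ER PR (picks l) (picks l').
Proof.
  induction 1.
  - apply ER_F2; constructor.
  - simpl. apply ER_cons. { split; simpl; auto. }
    apply ER_map with (R:=PR); auto. intros [a1 a2] [b1 b2] [H1 H2]; split; simpl in *; auto.
  - simpl. rewrite !map_map.
    eapply ER_trans. { apply PR_trans. }
    + apply ER_perm. { apply PR_refl. } apply perm_swap.
    + apply ER_F2. constructor. { apply PR_refl. } constructor. { apply PR_refl. }
      apply F2_mapfg. intros [a b]; split; simpl; auto. apply perm_swap.
  - eapply ER_trans; eauto. apply PR_trans.
Qed.

Lemma deck_cons2 {G} (op : G -> G -> G) y x l :
  deck op (y::x::l) = (op y x :: l) :: (map (fun p => op y (fst p) :: x :: snd p) (picks l)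
     ++ map (fun p => y :: op x (fst p) :: snd p) (picks l) ++ map (fun c => y :: x :: c) (deck op l)).
Proof. simpl. rewrite map_app, !map_map. reflexivity. Qed.

Lemma deck_perm {G} (op : G->G->G) (Hc : forall x y, op x y = op y x) l l' :
  Permutation l l' -> ER (@Permutation G) (deck op l) (deck op l').
Proof.
  induction 1.
  - apply ER_F2; constructor.
  - simpl. apply ER_app.
    + apply ER_map with (R := PR). { intros [a1 a2] [b1 b2] [H1 H2]; simpl in *; subst; auto. }
      apply picks_perm; auto.
    + apply ER_map with (R:= @Permutation G); auto.
  - rewrite !deck_cons2.
    eapply ER_trans. { intros; eapply Permutation_trans; eauto. }
    + apply ER_F2 with (Q := (op x y :: l) :: (map (fun p => x :: op y (fst p) :: snd p) (picks l)
     ++ map (fun p => op x (fst p) :: y :: snd p) (picks l) ++ map (fun c => x :: y :: c) (deck op l))).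
      constructor. { rewrite Hc; auto. }
      apply Forall2_app. { apply F2_mapfg; intros; apply perm_swap. }
      apply Forall2_app. { apply F2_mapfg; intros; apply perm_swap. }
      apply F2_mapfg; intros; apply perm_swap.
    + apply ER_perm. { intros; apply Permutation_refl. }
      apply perm_skip. rewrite !app_assoc. apply Permutation_app_tail. apply Permutation_app_comm.
  - eapply ER_trans; eauto. intros; eapply Permutation_trans; eauto.
Qed.

Definition eqdec {G} : forall x y : G, {x = y} + {x <> y} :=
  fun x y => excluded_middle_informative (x = y).
Definition cnt {G} (x : G) (l : list G) := count_occ eqdec l x.
Definition ind {G} (x y : G) : nat := if eqdec y x then 1 else 0.
Definition TD {G} (x : G) (D : list (list G)) := list_sum (map (cnt x) D).
Fixpoint sp {G} (op : G -> G -> G) (x : G) (l : list G) : nat :=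
  match l with [] => 0 | h :: t => cnt x (map (op h) t) + sp op x t end.

Lemma cnt_cons {G} (x h : G) t : cnt x (h::t) = ind x h + cnt x t.
Proof. unfold cnt, ind; simpl; destruct (eqdec h x); reflexivity. Qed.

Lemma cnt_le {G} (x : G) l : cnt x l <= length l.
Proof. apply count_occ_bound. Qed.

Lemma cnt2_le {G} (x1 x2 : G) l : x1 <> x2 -> cnt x1 l + cnt x2 l <= length l.
Proof.
  intros Hne; induction l as [|h t IH]; [unfold cnt; simpl; lia|].
  cbn [length]; rewrite !cnt_cons; unfold ind; destruct (eqdec h x1), (eqdec h x2); subst; try congruence; lia.
Qed.

Lemma cnt_perm {G} (x : G) l l' : Permutation l l' -> cnt x l = cnt x l'.
Proof. intros H; apply (proj1 (Permutation_count_occ eqdec l l') H). Qed.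

Lemma ind_same {G} (x : G) : ind x x = 1.
Proof. unfold ind; destruct (eqdec x x); congruence. Qed.
Lemma ind_diff {G} (x y : G) : y <> x -> ind x y = 0.
Proof. unfold ind; destruct (eqdec y x); congruence. Qed.

Lemma list_sum_cons a l : list_sum (a::l) = a + list_sum l.
Proof. reflexivity. Qed.

Lemma cnt_sum {G} (x : G) l : cnt x l = list_sum (map (ind x) l).
Proof. induction l; [reflexivity|]. cbn [map]; rewrite list_sum_cons, cnt_cons, IHl; reflexivity. Qed.

Lemma picks_fst {G} (t : list G) : map fst (picks t) = t.
Proof. induction t; simpl; auto. rewrite map_map; simpl. f_equal. exact IHt. Qed.

Lemma length_picks {G} (t : list G) : length (picks t) = length t.
Proof. induction t; simpl; auto. rewrite length_map; auto. Qed.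

Lemma list_sum_map_add {A} (f g : A -> nat) L :
  list_sum (map (fun a => f a + g a) L) = list_sum (map f L) + list_sum (map g L).
Proof. induction L; simpl; lia. Qed.

Lemma sum_const_plus {A} k (f : A -> nat) L :
  list_sum (map (fun c => k + f c) L) = k * length L + list_sum (map f L).
Proof. induction L; simpl; nia. Qed.

Lemma sum_cnt_picks {G} (x : G) t :
  list_sum (map (fun p => cnt x (snd p)) (picks t)) + cnt x t = length t * cnt x t.
Proof.
  induction t as [|y t IH]; [unfold cnt; simpl; lia|].
  cbn [picks map length snd fst]; rewrite list_sum_cons. rewrite map_map; cbn [snd fst].
  rewrite (map_ext (fun a => cnt x (y :: snd a)) (fun a => ind x y + cnt x (snd a)))
    by (intros; apply cnt_cons).
  rewrite sum_const_plus, length_picks, !cnt_cons. nia.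
Qed.

Lemma len_deck {G} (op : G -> G -> G) l : 2 * length (deck op l) + length l = length l * length l.
Proof.
  induction l as [|h t IH]; simpl; auto.
  rewrite length_app, !length_map, length_picks. nia.
Qed.

Lemma TD_formula {G} (op : G -> G -> G) x l :
  2 * TD x (deck op l) + 3 * length l * cnt x l = cnt x l * (length l * length l + 2) + 2 * sp op x l.
Proof.
  induction l as [|h t IH]; [unfold TD, cnt; simpl; lia|].
  cbn [deck sp length]. unfold TD in *. rewrite map_app, list_sum_app, !map_map.
  rewrite (map_ext (fun p => cnt x (op h (fst p) :: snd p)) (fun p => ind x (op h (fst p)) + cnt x (snd p)))
    by (intros; apply cnt_cons).
  rewrite (map_ext (fun c => cnt x (h :: c)) (fun c => ind x h + cnt x c))
    by (intros; apply cnt_cons).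
  rewrite list_sum_map_add, sum_const_plus.
  assert (E1 : list_sum (map (fun p => ind x (op h (fst p))) (picks t)) = cnt x (map (op h) t)).
  { rewrite cnt_sum. replace (map (op h) t) with (map (op h) (map fst (picks t))) by (rewrite picks_fst; reflexivity). rewrite !map_map. reflexivity. }
  rewrite E1. pose proof (sum_cnt_picks x t). pose proof (len_deck op t).
  rewrite cnt_cons.
  remember (list_sum (map (fun p => cnt x (snd p)) (picks t))) as Sp.
  remember (list_sum (map (cnt x) (deck op t))) as Tt.
  remember (length (deck op t)) as Ld.
  remember (length t) as m. remember (cnt x t) as c. remember (ind x h) as e.
  nia.
Qed.

Lemma sp_bound {G} (op : G -> G -> G) x l : 2 * sp op x l + length l <= length l * length l.
Proof.
  induction l as [|h t IH]; simpl; auto.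
  pose proof (cnt_le x (map (op h) t)). rewrite length_map in H. nia.
Qed.

Lemma sp2_bound {G} (op : G -> G -> G) x1 x2 l : x1 <> x2 ->
  2 * (sp op x1 l + sp op x2 l) + length l <= length l * length l.
Proof.
  intros Hne; induction l as [|h t IH]; simpl; auto.
  pose proof (cnt2_le x1 x2 (map (op h) t) Hne). rewrite length_map in H. nia.
Qed.

Lemma sp_perm {G} (op : G -> G -> G) (Hc : forall x y, op x y = op y x) x l l' :
  Permutation l l' -> sp op x l = sp op x l'.
Proof.
  induction 1; cbn [sp map].
  - reflexivity.
  - rewrite IHPermutation. f_equal. apply cnt_perm, Permutation_map; auto.
  - rewrite !cnt_cons, (Hc x0 y). lia.
  - congruence.
Qed.

Lemma key1 (a a' s s' n T : nat) : 5 <= n ->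
  2*T + 3*n*a = a*(n*n+2) + 2*s -> 2*T + 3*n*a' = a'*(n*n+2) + 2*s' ->
  2*s + n <= n*n -> a < a' -> a' = S a /\ 2*s + 3*n = 2*s' + n*n + 2.
Proof.
  intros H5 E1 E2 B Hlt.
  destruct (Nat.le_gt_cases a' (S a)) as [Hle|Hgt].
  - assert (a' = S a) by lia. subst a'. split; [reflexivity|]. nia.
  - exfalso. assert (exists d, a' = a + 2 + d) as [d Hd] by (exists (a' - a - 2); lia).
    subst a'. nia.
Qed.

Lemma no_two_big (s1 s2 n : nat) : 5 <= n -> 2*(s1+s2) + n <= n*n ->
  n*n+2 <= 2*s1 + 3*n -> n*n+2 <= 2*s2 + 3*n -> False.
Proof. intros; nia. Qed.

Lemma len_count {G} (x : G) l l' : (forall y, cnt y l <= cnt y l') ->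
  length l + (cnt x l' - cnt x l) <= length l'.
Proof.
  revert l'; induction l as [|h t IH]; intros l' H.
  - pose proof (cnt_le x l'). unfold cnt at 2; simpl. lia.
  - assert (Hin : In h l').
    { apply (proj2 (count_occ_In eqdec l' h)). specialize (H h). unfold cnt in H.
      simpl in H. destruct (eqdec h h); [lia|congruence]. }
    destruct (in_split _ _ Hin) as [l1 [l2 Hl]]. subst l'.
    assert (Hp : Permutation (l1 ++ h :: l2) (h :: l1 ++ l2)) by (apply Permutation_sym, Permutation_middle).
    assert (Hc : forall y, cnt y (l1 ++ h :: l2) = ind y h + cnt y (l1 ++ l2)).
    { intros y. rewrite (cnt_perm y _ _ Hp). apply cnt_cons. }
    specialize (IH (l1 ++ l2)).
    assert (IH' : length t + (cnt x (l1 ++ l2) - cnt x t) <= length (l1 ++ l2)).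
    { apply IH. intros y. specialize (H y). rewrite Hc, cnt_cons in H. lia. }
    rewrite (Permutation_length Hp). cbn [length]. rewrite Hc, cnt_cons. lia.
Qed.

Lemma core {G} (op : G -> G -> G) (Hc : forall x y, op x y = op y x) (M M' : list G) n :
  length M = n -> length M' = n -> 5 <= n ->
  (forall x, TD x (deck op M) = TD x (deck op M')) ->
  forall x, cnt x M < cnt x M' -> False.
Proof.
  intros HM HM' H5 HT.
  assert (K : forall (L L' : list G) z, length L = n -> length L' = n ->
     (forall x, TD x (deck op L) = TD x (deck op L')) -> cnt z L < cnt z L' ->
     cnt z L' = S (cnt z L) /\ 2 * sp op z L + 3*n = 2 * sp op z L' + n*n + 2).
  { intros L L' z HL HL' HT' Hlt.
    pose proof (TD_formula op z L) as E1. pose proof (TD_formula op z L') as E2.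
    rewrite HT' in E1. pose proof (sp_bound op z L) as B. rewrite HL in E1, B. rewrite HL' in E2.
    eapply key1; eauto. }
  assert (HTs : forall x, TD x (deck op M') = TD x (deck op M)) by (intros; auto).
  intros x Hx.
  destruct (K M M' x HM HM' HT Hx) as [Ex Sx].
  destruct (classic (exists y, cnt y M' < cnt y M)) as [[y Hy]|Hn].
  2:{ assert (Hle : forall y, cnt y M <= cnt y M').
      { intros y. destruct (Nat.le_gt_cases (cnt y M) (cnt y M')); auto. exfalso; apply Hn; eauto. }
      pose proof (len_count x M M' Hle). lia. }
  destruct (K M' M y HM' HM HTs Hy) as [Ey Sy].
  assert (Hxy : x <> y) by (intro; subst; lia).
  assert (Hother : forall z, z <> x -> z <> y -> cnt z M = cnt z M').
  { intros z Hzx Hzy. destruct (Nat.lt_total (cnt z M) (cnt z M')) as [Hl|[He|Hl]]; auto; exfalso.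
    - destruct (K M M' z HM HM' HT Hl) as [_ Sz].
      pose proof (sp2_bound op x z M (fun e => Hzx (eq_sym e))). rewrite HM in H.
      eapply (no_two_big (sp op x M) (sp op z M) n); eauto; lia.
    - destruct (K M' M z HM' HM HTs Hl) as [_ Sz].
      pose proof (sp2_bound op y z M' (fun e => Hzy (eq_sym e))). rewrite HM' in H.
      eapply (no_two_big (sp op y M') (sp op z M') n); eauto; lia. }
  assert (Hin : In y M).
  { apply (proj2 (count_occ_In eqdec M y)). unfold cnt in Hy. lia. }
  destruct (in_split _ _ Hin) as [M1 [M2 HMs]].
  set (N := M1 ++ M2).
  assert (HpM : Permutation M (y :: N)) by (subst M; apply Permutation_sym, Permutation_middle).
  assert (HpM' : Permutation M' (x :: N)).
  { apply (proj2 (Permutation_count_occ eqdec M' (x :: N))). intros z. fold (cnt z M') (cnt z (x::N)).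
    rewrite cnt_cons.
    assert (Hz : cnt z M = ind z y + cnt z N) by (rewrite (cnt_perm z _ _ HpM); apply cnt_cons).
    destruct (eqdec z x) as [->|Hzx].
    - rewrite ind_same. rewrite ind_diff in Hz by (intro; subst; congruence). lia.
    - rewrite (ind_diff z x) by (intro; subst; congruence).
      destruct (eqdec z y) as [->|Hzy].
      + rewrite ind_same in Hz. lia.
      + rewrite ind_diff in Hz by (intro; subst; congruence). rewrite <- (Hother z Hzx Hzy). lia. }
  rewrite (sp_perm op Hc x _ _ HpM), (sp_perm op Hc x _ _ HpM') in Sx.
  cbn [sp] in Sx.
  pose proof (cnt_le x (map (op y) N)). rewrite length_map in H.
  pose proof (Permutation_length HpM). cbn [length] in H0.
  nia.
Qed.

Lemma TD_same {G} (op : G -> G -> G) M M' : same_deck op M M' ->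
  forall x, TD x (deck op M) = TD x (deck op M').
Proof.
  intros [D'' [Hp Hf]] x. unfold TD.
  rewrite (Permutation_list_sum (Permutation_map (cnt x) Hp)).
  clear Hp. generalize dependent D''. generalize (deck op M). intros A B Hf.
  induction Hf; cbn [map]; auto. rewrite !list_sum_cons, (cnt_perm x _ _ H). lia.
Qed.

Lemma len_same {G} (op : G -> G -> G) M M' : 5 <= length M -> same_deck op M M' -> length M = length M'.
Proof.
  intros H5 [D'' [Hp Hf]].
  pose proof (Permutation_length Hp). pose proof (Forall2_length Hf).
  pose proof (len_deck op M). pose proof (len_deck op M').
  assert (length (deck op M) = length (deck op M')) by lia.
  destruct (Nat.lt_total (length M) (length M')) as [Hl|[He|Hl]]; auto; nia.
Qed.

Theorem mainTheorem3 (G : Type) (op : G -> G -> G)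
  (op_comm : forall x y : G, op x y = op y x) :
  (forall M M' : list G, length M = length M' -> 5 <= length M ->
     (same_deck op M M' <-> Permutation M M'))
  /\ (forall M : list G, 5 <= length M -> reconstructible op M).
Proof.
  assert (A : forall M M' : list G, length M = length M' -> 5 <= length M ->
     (same_deck op M M' <-> Permutation M M')).
  { intros M M' Hl H5; split.
    - intros Hd. pose proof (TD_same op M M' Hd) as HT.
      apply (proj2 (Permutation_count_occ eqdec M M')). intros z. fold (cnt z M) (cnt z M').
      destruct (Nat.lt_total (cnt z M) (cnt z M')) as [Hlt|[He|Hlt]]; auto; exfalso.
      + exact (core op op_comm M M' (length M) eq_refl (eq_sym Hl) H5 HT z Hlt).
      + exact (core op op_comm M' M (length M) (eq_sym Hl) eq_refl H5 (fun x => eq_sym (HT x)) z Hlt).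
    - intros Hp. exact (deck_perm op op_comm M M' Hp). }
  split; [exact A|].
  intros M H5 M' Hd. apply A; auto. apply (len_same op M M' H5 Hd).
Qed.
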